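(* Let $x\in\Gamma_0$ be such that for all $i,j,k,l$ in the same connected component of $G_x$ with $x_{ij}>0$ and $x_{kl}>0$ one has $a_{ij}p_{ij}=a_{kl}p_{kl}$. If property $P_{G_x}$ does not hold, then $G_x$ has at least one connected component in which every vertex belongs to at least two edges of $G_x$.
   Context: Let $G=(\mathbb{V},E)$ be a finite graph with adjacency $\sim$. Let $a_{ij}=a_{ji}\ge0$ ($>0$ only if $i\sim j$) and $p_{ij}=p_{ji}\in[0,1]$ ($=0$ if $i\not\sim j$), with some $a_{ij}p_{ij}>0$. Fix $h_1\in(0,1]$; $\Delta$ is the set of arrays $x=(x_{ij})$ with $x_{ij}=x_{ji}\ge0$, $x_{ij}=0$ if $i\not\sim j$, $\sum_{i,j}x_{ij}=1$, $\sum_{(i,j):a_{ij}p_{ij}>0}x_{ij}\ge h_1$; $x_i=\sum_jx_{ij}$. $\partial\Delta$: the $x\in\Delta$ for which some vertex $i$ having a neighbour $j$ with $a_{ij}p_{ij}>0$ has $\sum_{j:a_{ij}p_{ij}>0}x_{ij}=0$. $H(x)=\sum_{(i,j):x_{ij}>0}a_{ij}p_{ij}x_{ij}^2/(x_ix_j)$; $F(x)_{ij}=x_{ij}\big(a_{ij}p_{ij}\frac{x_{ij}}{x_ix_j}-H(x)\big)$ ($F_{ij}=0$ if $x_{ij}=0$; the fraction is $0$ if $a_{ij}p_{ij}=0$); $\Gamma=\{x\in\Delta:F(x)=0\}$, $\Gamma_0=\Gamma\cap(\Delta\setminus\partial\Delta)$. $G_x$: subgraph with vertex set $\mathbb{V}$,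 $i,j$ adjacent iff $x_{ij}>0$. For a subgraph $\mathcal{G}$ of $G$ (vertex set $\mathbb{V}$), property $P_{\mathcal{G}}$ means: (1) all edges $\{i,j\}$ of $\mathcal{G}$ lying in a same connected component have the same value $a_{ij}p_{ij}$, and it is $>0$; (2) each connected component contains at most one vertex with several neighbours; (3) a vertex $i$ lies on an edge of $\mathcal{G}$ iff $a_{ij}p_{ij}>0$ for some $j\sim i$. *)

(* Defs.v *)
From HB Require Import structures.
From mathcomp Require Import all_boot all_order all_algebra.
Set Implicit Arguments. Unset Strict Implicit. Unset Printing Implicit Defensive.
Import Order.TTheory GRing.Theory Num.Theory.
Local Open Scope ring_scope.

Section Defs.
Variables (R : realFieldType) (T : finType).

Definition ap (a p : T -> T -> R) (i j : T) : R := a i j * p i j.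

Definition xv (x : T -> T -> R) (i : T) : R := \sum_(j : T) x i j.

Definition inDelta (adj : rel T) (a p : T -> T -> R) (h1 : R) (x : T -> T -> R) : Prop :=
  [/\ (forall i j, x i j = x j i),
      (forall i j, 0 <= x i j),
      (forall i j, ~~ adj i j -> x i j = 0),
      \sum_(i : T) \sum_(j : T) x i j = 1
    & h1 <= \sum_(i : T) \sum_(j : T | 0 < ap a p i j) x i j].

Definition inBoundary (adj : rel T) (a p : T -> T -> R) (h1 : R) (x : T -> T -> R) : Prop :=
  inDelta adj a p h1 x /\
  exists i, (exists j, adj i j /\ 0 < ap a p i j) /\
            \sum_(j : T | 0 < ap a p i j) x i j = 0.

Definition Hfun (a p : T -> T -> R) (x : T -> T -> R) : R :=
  \sum_(i : T) \sum_(j : T | 0 < x i j)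
     ap a p i j * x i j ^+ 2 / (xv x i * xv x j).

Definition Ffun (a p : T -> T -> R) (x : T -> T -> R) (i j : T) : R :=
  if x i j == 0 then 0
  else x i j * (ap a p i j * x i j / (xv x i * xv x j) - Hfun a p x).

Definition inGamma adj a p h1 x : Prop :=
  inDelta adj a p h1 x /\ forall i j, Ffun a p x i j = 0.

Definition inGamma0 adj a p h1 x : Prop :=
  inGamma adj a p h1 x /\ ~ inBoundary adj a p h1 x.

Definition Gx (x : T -> T -> R) : rel T := fun i j => 0 < x i j.

Definition deg (Gr : rel T) (i : T) : nat := #|[pred j | Gr i j]|.

Definition propP (adj : rel T) (a p : T -> T -> R) (Gr : rel T) : Prop :=
  [/\ (forall i j k l, Gr i j -> Gr k l -> connect Gr i k ->
          ap a p i j = ap a p k l /\ 0 < ap a p i j),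
      (forall i k, connect Gr i k -> (1 < deg Gr i)%N -> (1 < deg Gr k)%N -> i = k)
    & (forall i, (exists j, Gr i j) <-> (exists j, adj i j /\ 0 < ap a p i j))].

End Defs.

(* Main.v *)
Require Import Defs.
From HB Require Import structures.
From mathcomp Require Import all_boot all_order all_algebra.
From mathcomp Require Import ring lra.
Set Implicit Arguments. Unset Strict Implicit.
Import Order.TTheory GRing.Theory Num.Theory.
Local Open Scope ring_scope.

Section Aux.
Variables (R : realFieldType) (T : finType).
Implicit Types (x : T -> T -> R).

Lemma xv_ge x (x0 : forall i j, 0 <= x i j) i j : x i j <= xv x i.
Proof.
rewrite /xv (bigD1 j) //= lerDl; apply: sumr_ge0 => k _; exact: x0.
Qed.

Lemma xv_ge0 x (x0 : forall i j, 0 <= x i j) i : 0 <= xv x i.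
Proof. apply: sumr_ge0 => k _; exact: x0. Qed.

Lemma xv_gt0 x (x0 : forall i j, 0 <= x i j) i j : 0 < x i j -> 0 < xv x i.
Proof. move=> h; exact: (lt_le_trans h (xv_ge x0 i j)). Qed.

Lemma edge_eq (a p : T -> T -> R) x (x0 : forall i j, 0 <= x i j)
  (xs : forall i j, x i j = x j i) i j :
  Ffun a p x i j = 0 -> 0 < x i j ->
  ap a p i j * x i j = Hfun a p x * (xv x i * xv x j).
Proof.
move=> hF hx; move: hF; rewrite /Ffun gt_eqF //= => /eqP.
rewrite mulf_eq0 gt_eqF //= subr_eq0 => /eqP e.
have D : xv x i * xv x j != 0.
  by rewrite mulf_neq0 // gt_eqF //; [exact: (xv_gt0 x0 hx)|
     apply: (xv_gt0 x0 (j:=i)); rewrite xs].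
by rewrite -e divfK.
Qed.

Lemma connect_closed (e : rel T) (P : T -> Prop) u v :
  (forall a b, P a -> e a b -> P b) -> P u -> connect e u v -> P v.
Proof.
move=> hc hu /connectP [s hs ->]; elim: s u hu hs => [|w s IH] u hu //=.
by move=> /andP [euw hs]; apply: IH (hc _ _ hu euw) hs.
Qed.


Lemma H_pos adj (a p : T -> T -> R) h1 x :
  inDelta adj a p h1 x -> 0 < h1 -> (forall i j, Ffun a p x i j = 0) ->
  0 < Hfun a p x.
Proof.
case=> xs x0 xadj xsum xh h1p hF.
case: (boolP [exists i, exists j, (0 < ap a p i j) && (0 < x i j)]).
  move/existsP => [i /existsP [j /andP [ha hx]]].
  have e := edge_eq x0 xs (hF i j) hx.
  have : 0 < ap a p i j * x i j by apply: mulr_gt0.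
  rewrite e pmulr_lgt0 //; apply: mulr_gt0; first exact: (xv_gt0 x0 hx).
  by apply: (xv_gt0 x0 (j:=i)); rewrite xs.
rewrite negb_exists => /forallP h.
have : \sum_(i : T) \sum_(j : T | 0 < ap a p i j) x i j = 0.
  apply: big1 => i _; apply: big1 => j hj.
  move: (h i); rewrite negb_exists => /forallP /(_ j); rewrite hj /= => hx.
  by apply/eqP; rewrite eq_le x0 andbT leNgt.
move=> e; rewrite e in xh; exfalso; move: (lt_le_trans h1p xh); by rewrite ltxx.
Qed.


Lemma nGx0 x (x0 : forall i j, 0 <= x i j) i j : ~~ Gx x i j -> x i j = 0.
Proof. by rewrite /Gx -leNgt => h; apply/eqP; rewrite eq_le h x0. Qed.

Lemma leaf adj (a p : T -> T -> R) h1 x :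
  inGamma adj a p h1 x -> 0 < h1 ->
  (forall i j k l, connect (Gx x) i k -> 0 < x i j -> 0 < x k l ->
      ap a p i j = ap a p k l) ->
  forall m j, Gx x m j -> (forall l, Gx x m l -> l = j) ->
  forall k l, Gx x j k -> Gx x k l -> l = j.
Proof.
move=> [hD hF] h1p hc m j hmj hu k l hjk hkl.
have Hp := H_pos hD h1p hF.
case: hD => xs x0 _ _ _.
case: (eqVneq l j) => // hlj; exfalso.
set H := Hfun a p x in Hp.
set c := ap a p m j.
have xvm : xv x m = x m j.
  rewrite /xv (bigD1 j) //= big1 ?addr0 // => l' hl'.
  apply: nGx0 => //; apply/negP => g; move: (hu _ g) hl' => ->; by rewrite eqxx.
have e1 := edge_eq x0 xs (hF m j) hmj; rewrite xvm -/c -/H in e1.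
have cj : c = H * xv x j.
  apply: (mulIf (x := x m j)); first by rewrite gt_eqF.
  by rewrite e1; ring.
have hck : forall l', Gx x k l' -> ap a p k l' = c.
  move=> l' h; symmetry; apply: hc => //.
  exact: (connect_trans (connect1 hmj) (connect1 hjk)).
have xvk : xv x k = \sum_(l' | Gx x k l') x k l'.
  rewrite /xv (bigID (Gx x k)) /= [X in _ + X]big1 ?addr0 // => l' hl'.
  exact: nGx0.
set S := \sum_(l' | Gx x k l') xv x l'.
have ck : c * xv x k = H * xv x k * S.
  rewrite {1}xvk mulr_sumr /S mulr_sumr; apply: eq_bigr => l' hl'.
  by rewrite -(hck _ hl') edge_eq // mulrA.
have xkp : 0 < xv x k.
  by apply: (xv_gt0 x0 (j:=j)); rewrite /Gx xs in hjk.
have cS : c = H * S.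
  apply: (mulIf (x := xv x k)); first by rewrite gt_eqF.
  by rewrite ck; ring.
have hS : xv x j + xv x l <= S.
  have gkj : Gx x k j by rewrite /Gx xs.
  rewrite /S (bigD1 j) //= (bigD1 l) /=; last by rewrite hkl hlj.
  rewrite addrA lerDl; apply: sumr_ge0 => i _; exact: xv_ge0.
have xlp : 0 < xv x l.
  by apply: (xv_gt0 x0 (j:=k)); rewrite xs.
have := ler_wpM2l (ltW Hp) hS; rewrite mulrDr.
have := mulr_gt0 Hp xlp.
lra.
Qed.

End Aux.

Theorem lemma11 (R : realFieldType) (T : finType) (adj : rel T)
  (a p : T -> T -> R) (h1 : R) (x : T -> T -> R) :
  (forall i j, adj i j = adj j i) ->
  (forall i, ~~ adj i i) ->
  (forall i j, a i j = a j i) ->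
  (forall i j, 0 <= a i j) ->
  (forall i j, 0 < a i j -> adj i j) ->
  (forall i j, p i j = p j i) ->
  (forall i j, 0 <= p i j <= 1) ->
  (forall i j, ~~ adj i j -> p i j = 0) ->
  (exists i j, 0 < ap a p i j) ->
  0 < h1 <= 1 ->
  inGamma0 adj a p h1 x ->
  (forall i j k l, connect (Gx x) i k -> 0 < x i j -> 0 < x k l ->
      ap a p i j = ap a p k l) ->
  ~ propP adj a p (Gx x) ->
  exists i, forall k, connect (Gx x) i k -> (1 < deg (Gx x) k)%N.
Proof.
move=> adjs adjirr as_ a0 aadj ps p01 padj exap h1r hG0 hc hnP.
case: hG0 => hG hnb.
have hG' := hG; case: hG' => hD hF.
have hD' := hD; case: hD' => xs x0 xadj xsum xh.
have h1p : 0 < h1 by case/andP: h1r.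
have Hp := H_pos hD h1p hF.
have gsym : symmetric (Gx x) by move=> i j; rewrite /Gx xs.
have csym := sym_connect_sym gsym.
have appos : forall i j, Gx x i j -> 0 < ap a p i j.
  move=> i j h; have e := edge_eq x0 xs (hF i j) h.
  have : 0 < ap a p i j * x i j.
    rewrite e; apply: mulr_gt0 => //; apply: mulr_gt0.
      exact: (xv_gt0 x0 h).
    by apply: (xv_gt0 x0 (j:=i)); rewrite /Gx xs in h.
  by rewrite pmulr_lgt0.
case: (boolP [exists i, [forall k, connect (Gx x) i k ==> (1 < deg (Gx x) k)%N]]).
  move=> /existsP [i /forallP h]; exists i => k hk; exact: (implyP (h k) hk).
rewrite negb_exists => /forallP hall; exfalso; apply: hnP; split.
- move=> i j k l hij hkl hik; split; [exact: hc | exact: appos].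
- move=> i k hik di dk; case: (eqVneq i k) => // hne; exfalso.
  move: (hall i); rewrite negb_forall => /existsP [m].
  rewrite negb_imply -leqNgt => /andP [him dm].
  have him' : connect (Gx x) m i by rewrite csym.
  have him2 := him'.
  case/connectP: him2 => [[|w s] /= hp ei].
    by rewrite ei in di; move: di; rewrite ltnNge dm.
  move/andP: hp => [hmw _].
  have hu : forall l, Gx x m l -> l = w.
    move=> l hl; move/card_le1_eqP: dm => hq.
    by have := hq w l; rewrite !inE => /(_ hmw hl).
  have hl := leaf hG h1p hc hmw hu.
  pose P v := v = w \/ Gx x w v.
  have Pc : forall u v, P u -> Gx x u v -> P v.
    move=> u v [->|hwu] huv; first by right.
    by left; exact: (hl u v hwu huv).
  have Pm : P m by right; rewrite gsym.
  have Pi := connect_closed Pc Pm him'.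
  have Pk := connect_closed Pc Pm (connect_trans him' hik).
  have dle : forall v, Gx x w v -> (deg (Gx x) v <= 1)%N.
    move=> v hv; rewrite /deg.
    apply: (leq_trans (subset_leq_card (B:=pred1 w) _)); last by rewrite card1.
    by apply/subsetP => y; rewrite !inE => hy; rewrite (hl v y hv hy).
  case: Pi => [ei'|hi]; last by move: (dle _ hi); rewrite leqNgt di.
  case: Pk => [ek|hk]; last by move: (dle _ hk); rewrite leqNgt dk.
  by move: hne; rewrite ei' ek eqxx.
- move=> i; split.
  + move=> [j hj]; exists j; split; last exact: appos.
    by case: (boolP (adj i j)) => // /xadj e; rewrite /Gx e ltxx in hj.
  + move=> [j [hadj hap]].
    case: (boolP [exists j, Gx x i j]) => [/existsP//|].
    rewrite negb_exists => /forallP hn; exfalso; apply: hnb; split => //.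
    exists i; split; first by exists j.
    by apply: big1 => l _; apply: nGx0 => //; exact: hn.
Qed.
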